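(* Let $P$ be a point of $\mathrm{PG}(2,q^3)$ with $P\neq T$, $P$ not on the line $m_T$ and $P\notin\mathcal P_{2,q}$. Then $P$ lies in the Fig-block $\mathrm{Fig}(T)$ if and only if the projection of $\mathcal P_{2,q}$ from $P$ onto $m_T$, i.e. $\{PQ\cap m_T:Q\in\mathcal P_{2,q}\}$, is a $T$-sls (that is, one of the sets $\mathcal S_\theta=\{(x\theta,x^q,0):x\in\mathbb{F}_{q^3}^*\}$, $\theta\in\mathbb{F}_{q^3}^*$; equivalently a scattered $\mathbb{F}_q$-linear set of pseudoregulus type with transversal points $T^\phi$, $T^{\phi^2}$).
   Context: Let $q$ be a prime power, $\mathbb{F}_{q^3}^*=\mathbb{F}_{q^3}\setminus\{0\}$. Points of $\mathrm{PG}(2,q^3)$ have homogeneous coordinates $(x,y,z)$ and lines $[a,b,c]$. Let $\phi$ be the collineation $(x,y,z)\mapsto(z^q,x^q,y^q)$ (on lines $[d,e,f]\mapsto[f^q,d^q,e^q]$), whose fixed points form the subplane $\mathcal P_{2,q}=\{(x,x^q,x^{q^2}):x\in\mathbb{F}_{q^3}^*\}$. A point has Type II (resp. III) if its $\phi$-orbit is three collinear (resp. non-collinear) points; a line has Type III if its $\phi$-orbit is three non-concurrent lines. For a Type III point $X$, the Fig-block is $\mathrm{Fig}(X)=\mathcal E_X\cup\mathcal F_X$, where $\mathcal E_X$ is the set of Type II points on the line $X^\phi X^{\phi^2}$ and $\mathcal F_X=\{\ell^\phi\cap\ell^{\phi^2}:\ell\text{ a Type III line through }X\}$. Let $T=(0,0,1)$,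 $T^\phi=(1,0,0)$, $T^{\phi^2}=(0,1,0)$, and $m_T=T^\phi T^{\phi^2}$ the line $[0,0,1]$. *)

(* Defs.v *)
(* Projective plane PG(2, F) over a finite field F = F_{q^3}:
   points and lines are nonzero coordinate triples, considered up to nonzero
   scalars; every predicate below is invariant under rescaling. *)
From mathcomp Require Import all_boot all_algebra.
Set Implicit Arguments. Unset Strict Implicit. Unset Printing Implicit Defensive.
Import GRing.Theory.
Local Open Scope ring_scope.

Record vec3 (F : Type) := V3 { c1 : F; c2 : F; c3 : F }.

Section Plane.
Variables (F : fieldType) (q : nat).
Implicit Types (u v w P Q R X l : vec3 F).

Definition nz v : Prop := ~ (c1 v = 0 /\ c2 v = 0 /\ c3 v = 0).
Definition scale (c : F) v := V3 (c * c1 v) (c * c2 v) (c * c3 v).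
Definition prop u v : Prop := exists c : F, c != 0 /\ u = scale c v.

Definition dot u v : F := c1 u * c1 v + c2 u * c2 v + c3 u * c3 v.
(* line through two points / intersection point of two lines *)
Definition cross u v : vec3 F :=
  V3 (c2 u * c3 v - c3 u * c2 v) (c3 u * c1 v - c1 u * c3 v)
     (c1 u * c2 v - c2 u * c1 v).
Definition det3 u v w : F := dot u (cross v w).

Definition onl P l : Prop := dot l P = 0.

(* the collineation phi: on points (x,y,z) |-> (z^q,x^q,y^q);
   on lines [d,e,f] |-> [f^q,d^q,e^q] (same coordinate formula) *)
Definition phi v : vec3 F := V3 (c3 v ^+ q) (c1 v ^+ q) (c2 v ^+ q).

Definition distinct3 u v w : Prop := ~ prop u v /\ ~ prop v w /\ ~ prop u w.

Definition typeII_pt X : Prop :=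
  nz X /\ distinct3 X (phi X) (phi (phi X)) /\ det3 X (phi X) (phi (phi X)) = 0.
Definition typeIII_pt X : Prop :=
  nz X /\ distinct3 X (phi X) (phi (phi X)) /\ det3 X (phi X) (phi (phi X)) != 0.
Definition typeIII_line l : Prop :=
  nz l /\ distinct3 l (phi l) (phi (phi l)) /\ det3 l (phi l) (phi (phi l)) != 0.

Definition inE X P : Prop := typeII_pt P /\ onl P (cross (phi X) (phi (phi X))).
Definition inFF X P : Prop :=
  nz P /\ exists l, typeIII_line l /\ onl X l /\ prop P (cross (phi l) (phi (phi l))).
Definition inFig X P : Prop := inE X P \/ inFF X P.

Definition frob_pt (x : F) : vec3 F := V3 x (x ^+ q) (x ^+ (q ^ 2)%N).
Definition inPsub P : Prop := exists x : F, x != 0 /\ prop P (frob_pt x).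

Definition T : vec3 F := V3 0 0 1.
(* m_T = T^phi T^phi^2 = [0,0,1] *)
Definition mT : vec3 F := V3 0 0 1.

Definition proj_from P R : Prop :=
  exists x : F, x != 0 /\ prop R (cross (cross P (frob_pt x)) mT).

Definition S_theta (th : F) R : Prop :=
  exists x : F, x != 0 /\ prop R (V3 (x * th) (x ^+ q) 0).

Definition is_Tsls (A : vec3 F -> Prop) : Prop :=
  exists th : F, th != 0 /\ forall R, nz R -> (A R <-> S_theta th R).

End Plane.

(* Main.v *)
Require Import Defs.
From mathcomp Require Import all_boot all_algebra all_field.
From mathcomp Require Import ring zify.
Set Implicit Arguments. Unset Strict Implicit. Unset Printing Implicit Defensive.
Import GRing.Theory.
Local Open Scope ring_scope.

Definition fr (F : finFieldType) (q : nat) (x : F) : F := x ^+ q.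

Definition HQ (q : nat) := exists p k : nat, prime p /\ q = (p ^ k.+1)%N.

Lemma q_gt1 q : HQ q -> (1 < q)%N.
Proof.
case=> p [k [pp ->]]; have p1 := prime_gt1 pp.
rewrite expnS; have : (0 < p ^ k)%N by rewrite expn_gt0 ltnW.
nia.
Qed.

Lemma frD q (F : finFieldType) (hq : HQ q) (hF : #|F| = (q ^ 3)%N) (x y : F) :
  fr q (x + y) = fr q x + fr q y.
Proof.
case: (hq) => p [k [pp qe]].
have pc : p \in [pchar F].
  apply: (@card_finPcharP _ p (k.+1 * 3)) => //; by rewrite hF qe expnM.
rewrite /fr exprDn_pchar // qe pnatX orbC /=.
by rewrite (pnatE _ pp).
Qed.

Lemma fr3 q (F : finFieldType) (hF : #|F| = (q ^ 3)%N) (x : F) :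
  fr q (fr q (fr q x)) = x.
Proof.
rewrite /fr -!exprM.
have -> : (q * (q * q) = #|F|)%N by rewrite hF !expnS expn0 muln1.

exact: expf_card.
Qed.

Lemma poly_zero (F : finFieldType) (cs : seq F) (es : seq nat) :
  uniq es -> all (fun e => e < #|F|)%N es ->
  (forall x : F, \sum_(i < size es) cs`_i * x ^+ (nth 0%N es i) = 0) ->
  forall i, (i < size es)%N -> cs`_i = 0.
Proof.
move=> Hu Hall Hsum i Hi.
pose p : {poly F} := \sum_(j < size es) cs`_j *: 'X^(nth 0%N es j).
have ev x : p.[x] = \sum_(j < size es) cs`_j * x ^+ (nth 0%N es j).
  rewrite /p horner_sum; apply: eq_bigr => j _; by rewrite hornerZ hornerXn.
have sz : (size p <= #|F|)%N.
  apply: leq_trans (size_sum _ _ _) _; apply/bigmax_leqP => j _.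
  apply: leq_trans (size_scale_leq _ _) _; rewrite size_polyXn.
  exact: (allP Hall) _ (mem_nth 0%N (ltn_ord j)).
have p0 : p = 0.
  apply: (@roots_geq_poly_eq0 _ _ (enum F)).
  - by apply/allP => x _; rewrite /root ev Hsum.
  - exact: enum_uniq.
  - by rewrite -cardE.
have := congr1 (fun r : {poly F} => r`_(nth 0%N es i)) p0.
rewrite coef0 /p coef_sum (bigD1 (Ordinal Hi)) //= big1.
  by rewrite coefZ coefXn eqxx mulr1 addr0.
move=> j /eqP Hj; rewrite coefZ coefXn.
case: eqP => [e|]; last by rewrite mulr0.
exfalso; apply: Hj; apply: val_inj => /=.
by apply/eqP; rewrite -(nth_uniq 0%N _ _ Hu) // e.
Qed.


Lemma fr0 q (F : finFieldType) (hq : HQ q) : fr q (0 : F) = 0.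
Proof. by rewrite /fr expr0n (gtn_eqF (ltnW (q_gt1 hq))). Qed.

Lemma fr1 q (F : finFieldType) : fr q (1 : F) = 1.
Proof. by rewrite /fr expr1n. Qed.

Lemma frM q (F : finFieldType) (x y : F) : fr q (x * y) = fr q x * fr q y.
Proof. by rewrite /fr exprMn. Qed.

Lemma frV q (F : finFieldType) (x : F) : fr q (x^-1) = (fr q x)^-1.
Proof. by rewrite /fr exprVn. Qed.

Lemma frN q (F : finFieldType) (hq : HQ q) (hF : #|F| = (q ^ 3)%N) (x : F) :
  fr q (- x) = - fr q x.
Proof.
apply/eqP; rewrite -subr_eq0 opprK -frD // addNr fr0 //.
Qed.

Lemma frB q (F : finFieldType) (hq : HQ q) (hF : #|F| = (q ^ 3)%N) (x y : F) :
  fr q (x - y) = fr q x - fr q y.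
Proof. by rewrite frD // frN. Qed.

Lemma fr_eq0 q (F : finFieldType) (hq : HQ q) (hF : #|F| = (q ^ 3)%N) (x : F) :
  (fr q x == 0) = (x == 0).
Proof.
apply/eqP/eqP => [h|->]; last exact: fr0.
by rewrite -(fr3 hF x) h !fr0.
Qed.

Definition Nm q (F : finFieldType) (x : F) := x * fr q x * fr q (fr q x).

Lemma frNm q (F : finFieldType) (hF : #|F| = (q ^ 3)%N) (x : F) :
  fr q (Nm q x) = Nm q x.
Proof. rewrite /Nm !frM fr3 //; ring. Qed.

Lemma NmM q (F : finFieldType) (x y : F) : Nm q (x * y) = Nm q x * Nm q y.
Proof. rewrite /Nm !frM; ring. Qed.

Lemma NmN1 q (F : finFieldType) (hq : HQ q) (hF : #|F| = (q ^ 3)%N) :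
  Nm q (-1 : F) = -1.
Proof. rewrite /Nm !frN // !fr1; ring. Qed.

Lemma Nm_eq0 q (F : finFieldType) (hq : HQ q) (hF : #|F| = (q ^ 3)%N) (x : F) :
  (Nm q x == 0) = (x == 0).
Proof. by rewrite /Nm !mulf_eq0 !fr_eq0 // orbb orbb. Qed.

Lemma vec3_eq (F : Type) (a b c a' b' c' : F) :
  a = a' -> b = b' -> c = c' -> V3 a b c = V3 a' b' c'.
Proof. by move=> -> -> ->. Qed.

Lemma prop_refl (F : fieldType) (u : vec3 F) : prop u u.
Proof. exists 1; split; first exact: oner_neq0. by case: u => a b c; rewrite /scale /= !mul1r. Qed.

Lemma prop_sym (F : fieldType) (u v : vec3 F) : prop u v -> prop v u.
Proof.
case=> c [c0 ->]; exists c^-1; split; first by rewrite invr_eq0.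
case: v => a b d; rewrite /scale /=; apply: vec3_eq; by rewrite mulrA mulVf // mul1r.
Qed.

Lemma prop_trans (F : fieldType) (u v w : vec3 F) : prop u v -> prop v w -> prop u w.
Proof.
case=> c [c0 ->] [d [d0 ->]]; exists (c * d); split; first by rewrite mulf_neq0.
case: w => a b e; rewrite /scale /=; apply: vec3_eq; by rewrite mulrA.
Qed.

Lemma prop_scale (F : fieldType) (c : F) (v : vec3 F) : c != 0 -> prop (scale c v) v.
Proof. by move=> c0; exists c. Qed.

Lemma frob_fr q (F : finFieldType) (x : F) :
  frob_pt q x = V3 x (fr q x) (fr q (fr q x)).
Proof. by rewrite /frob_pt /fr -exprM expnS expn1. Qed.

Lemma prop_scaleR (F : fieldType) (c : F) (u v : vec3 F) : c != 0 ->
  (prop u (scale c v) <-> prop u v).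
Proof.
move=> c0; split=> h.
- apply: prop_trans h (prop_scale _ c0).
- apply: prop_trans h (prop_sym (prop_scale _ c0)).
Qed.

Definition Xf q (F : finFieldType) (a : F) (x : F) := x - a * fr q (fr q x).
Definition Yf q (F : finFieldType) (b : F) (x : F) := fr q x - b * fr q (fr q x).
Definition Vf q (F : finFieldType) (a b : F) (x : F) := V3 (Xf q a x) (Yf q b x) 0.

Lemma proj_iff q (F : finFieldType) (a b p3 : F) (R : vec3 F) : p3 != 0 ->
  (proj_from q (V3 (a * p3) (b * p3) p3) R <->
   exists x : F, x != 0 /\ prop R (Vf q a b x)).
Proof.
move=> p0.
have E x : cross (cross (V3 (a * p3) (b * p3) p3) (frob_pt q x)) (mT F)
           = scale p3 (Vf q a b x).
  rewrite frob_fr /cross /mT /scale /Vf /Xf /Yf /=; apply: vec3_eq; ring.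
split; case=> x [x0 h]; exists x; split=> //.
- by move: h; rewrite E prop_scaleR.
- by rewrite E prop_scaleR.
Qed.

Lemma det_distinct (F : fieldType) (u v w : vec3 F) :
  det3 u v w != 0 -> nz u /\ distinct3 u v w.
Proof.
case: u => u1 u2 u3; case: v => v1 v2 v3; case: w => w1 w2 w3.
rewrite /det3 /dot /cross /nz /distinct3 /prop /scale /= => hd.
split; first by case=> h1 [h2 h3]; move: hd; rewrite h1 h2 h3 !mul0r !addr0 eqxx.
split; last split.
- case=> c [_ [e1 e2 e3]]; move: hd; rewrite e1 e2 e3; apply/negP; rewrite negbK; apply/eqP; ring.
- case=> c [_ [e1 e2 e3]]; move: hd; rewrite e1 e2 e3; apply/negP; rewrite negbK; apply/eqP; ring.
- case=> c [_ [e1 e2 e3]]; move: hd; rewrite e1 e2 e3; apply/negP; rewrite negbK; apply/eqP; ring.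
Qed.

Lemma phi_fr q (F : finFieldType) (v : vec3 F) :
  phi q v = V3 (fr q (c3 v)) (fr q (c1 v)) (fr q (c2 v)).
Proof. by []. Qed.

Lemma inFig_iff q (F : finFieldType) (hq : HQ q) (hF : #|F| = (q ^ 3)%N)
  (P : vec3 F) : nz P -> c3 P != 0 ->
  (inFig q (T F) P <-> exists d e : F, Nm q d + Nm q e != 0 /\
     prop P (V3 (fr q d * fr q (fr q d)) (fr q e * fr q (fr q e))
                (- (fr q d * fr q (fr q e))))).
Proof.
move=> hP hp3.
have f0 := fr0 F hq.
have E (d e : F) : cross (phi q (V3 d e 0)) (phi q (phi q (V3 d e 0))) =
  V3 (fr q d * fr q (fr q d)) (fr q e * fr q (fr q e)) (- (fr q d * fr q (fr q e))).
  rewrite !phi_fr /cross /= !f0.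
  apply: vec3_eq; ring.
have D (d e : F) : det3 (V3 d e 0) (phi q (V3 d e 0)) (phi q (phi q (V3 d e 0))) =
    Nm q d + Nm q e.
  rewrite /det3 E /dot /Nm /=; ring.
split.
- case.
  + case=> _; rewrite /onl /T !phi_fr /cross /dot /= !f0 !fr1.
    move=> h; exfalso; move/eqP: hp3; apply; rewrite -[RHS]h; ring.
  + case=> _ [[d e f] [h3 [hT hp]]].
    move: hT; rewrite /onl /T /dot /= !mulr0 !add0r mulr1 => hf; subst f.
    exists d, e; split; last by rewrite -E.
    by rewrite -D; case: h3 => _ [_].
- case=> d [e [hde hp]]; right; split=> //.
  exists (V3 d e 0); split; last split.
  + have hd : det3 (V3 d e 0) (phi q (V3 d e 0)) (phi q (phi q (V3 d e 0))) != 0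
      by rewrite D.
    by have [h1 h2] := det_distinct hd.
  + by rewrite /onl /T /dot /=; ring.
  + by rewrite E.
Qed.

Lemma Nm_fr q (F : finFieldType) (hF : #|F| = (q ^ 3)%N) (x : F) :
  Nm q (fr q x) = Nm q x.
Proof. rewrite /Nm fr3 //; ring. Qed.

Lemma NmN q (F : finFieldType) (hq : HQ q) (hF : #|F| = (q ^ 3)%N) (x : F) :
  Nm q (- x) = - Nm q x.
Proof. by rewrite -mulN1r NmM NmN1 // mulN1r. Qed.

Lemma lhs_core q (F : finFieldType) (hq : HQ q) (hF : #|F| = (q ^ 3)%N)
  (a b p3 : F) : p3 != 0 ->
  ((exists d e : F, Nm q d + Nm q e != 0 /\
     prop (V3 (a * p3) (b * p3) p3)
       (V3 (fr q d * fr q (fr q d)) (fr q e * fr q (fr q e))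
                (- (fr q d * fr q (fr q e))))) <->
   (a * fr q b = 1 /\ Nm q b != 1)).
Proof.
move=> hp3; split.
- case=> d [e [hde [k [k0 hk]]]].
  move: hk; rewrite /scale /= => -[e1 e2 e3].
  have fd0 : fr q d != 0.
    apply/eqP=> h; move: hp3; rewrite e3 h; apply/negP; rewrite negbK; apply/eqP; ring.
  have fe0 : fr q (fr q e) != 0.
    apply/eqP=> h; move: hp3; rewrite e3 h; apply/negP; rewrite negbK; apply/eqP; ring.
  have fd20 : fr q (fr q d) != 0 by rewrite fr_eq0.
  have hb : b * fr q d = - fr q e.
    apply: (mulIf hp3); rewrite mulrAC e2 e3; ring.
  have ha : a * fr q (fr q e) = - fr q (fr q d).
    apply: (mulIf hp3); rewrite mulrAC e1 e3; ring.
  have hb' : fr q b * fr q (fr q d) = - fr q (fr q e).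
    by rewrite -frM hb frN.
  split.
  + apply: (mulIf fd20); rewrite mul1r -mulrA hb' mulrN ha opprK.
    done.
  + apply/eqP=> hN; move: hde; apply/negP; rewrite negbK.
    have := congr1 (@Nm q F) hb; rewrite NmM NmN // !Nm_fr // hN mul1r.
    by rewrite addrC => ->; rewrite subrr.
- case=> hab hN.
  have b0 : b != 0 by apply/eqP=> h; move: hab; rewrite h fr0 // mulr0 => /eqP; rewrite eq_sym oner_eq0.
  have fb0 : fr q b != 0 by rewrite fr_eq0.
  exists 1, (- fr q (fr q b)); split.
  + rewrite NmN // Nm_fr // Nm_fr // /Nm !fr1 !mulr1.
    by rewrite subr_eq0 eq_sym.
  + exists (p3 / fr q b); split; first by rewrite mulf_neq0 // invr_eq0.
    rewrite /scale /= !fr1 !frN // !fr3 // !mul1r.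
    have ha : a = (fr q b)^-1 by apply: (mulIf fb0); rewrite hab mulVf.
    apply: vec3_eq; rewrite ?ha; field; exact: fb0.
Qed.

Lemma expand (F : comRingType) (A B C a fa f2a b fb f2b n : F) :
 (A - a*C)*(B - fa*A)*(C - f2a*B) - n*((B - b*C)*(C - fb*A)*(A - f2b*B)) =
  (1 - a*fa*f2a - n*(1 - b*fb*f2b)) * (A^+1*B^+1*C^+1)
  + (-f2a - n*(fb*f2b)) * (A^+1*B^+2*C^+0)
  + (-fa - n*(b*fb)) * (A^+2*B^+0*C^+1)
  + (fa*f2a - n*(-fb)) * (A^+2*B^+1*C^+0)
  + (-a - n*(b*f2b)) * (A^+0*B^+1*C^+2)
  + (a*f2a - n*(-f2b)) * (A^+0*B^+2*C^+1)
  + (a*fa - n*(-b)) * (A^+1*B^+0*C^+2).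
Proof. ring. Qed.

Lemma mono q (F : finFieldType) (x : F) (i j k : nat) :
  x ^+ i * fr q x ^+ j * fr q (fr q x) ^+ k = x ^+ (i + q * j + q * q * k).
Proof. by rewrite /fr -!exprM !exprD mulnA. Qed.

Lemma frX q (F : finFieldType) (hq : HQ q) (hF : #|F| = (q ^ 3)%N) (a x : F) :
  fr q (Xf q a x) = fr q x - fr q a * x.
Proof. by rewrite /Xf frB // frM fr3. Qed.

Lemma frY q (F : finFieldType) (hq : HQ q) (hF : #|F| = (q ^ 3)%N) (b x : F) :
  fr q (Yf q b x) = fr q (fr q x) - fr q b * x.
Proof. by rewrite /Yf frB // frM fr3. Qed.

Lemma frX2 q (F : finFieldType) (hq : HQ q) (hF : #|F| = (q ^ 3)%N) (a x : F) :
  fr q (fr q (Xf q a x)) = fr q (fr q x) - fr q (fr q a) * fr q x.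
Proof. by rewrite frX // frB // frM. Qed.

Lemma frY2 q (F : finFieldType) (hq : HQ q) (hF : #|F| = (q ^ 3)%N) (b x : F) :
  fr q (fr q (Yf q b x)) = x - fr q (fr q b) * fr q x.
Proof. by rewrite frY // frB // frM fr3. Qed.

Lemma coef_extract q (F : finFieldType) (hq : HQ q) (hF : #|F| = (q ^ 3)%N)
  (a b n : F) :
  (forall x, Nm q (Xf q a x) - n * Nm q (Yf q b x) = 0) ->
  (-a - n * (b * fr q (fr q b)) = 0) /\ (a * fr q a - n * (- b) = 0).
Proof.
move=> H.
set fa := fr q a; set f2a := fr q (fr q a); set fb := fr q b; set f2b := fr q (fr q b).
pose cs := [:: 1 - a*fa*f2a - n*(1 - b*fb*f2b); -f2a - n*(fb*f2b);
   -fa - n*(b*fb); fa*f2a - n*(-fb); -a - n*(b*f2b); a*f2a - n*(-f2b);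
   a*fa - n*(-b)].
pose es := [:: (1 + q * 1 + q * q * 1)%N; (1 + q * 2 + q * q * 0)%N;
   (2 + q * 0 + q * q * 1)%N; (2 + q * 1 + q * q * 0)%N;
   (0 + q * 1 + q * q * 2)%N; (0 + q * 2 + q * q * 1)%N;
   (1 + q * 0 + q * q * 2)%N].
have Hsum x : \sum_(t < size es) cs`_t * x ^+ (nth 0%N es t) = 0.
  rewrite (_ : size es = 7%N) // !big_ord_recr big_ord0 /= add0r.
  rewrite -(H x) /Nm frX2 // frX // frY2 // frY // expand !mono.
  done.
suff [h4 h6] : cs`_4 = 0 /\ cs`_6 = 0 by split.
have q2 := q_gt1 hq.
have [q3|] := leqP 3 q.
  have U : uniq es.
    rewrite /es /= !inE !negb_or.
    set Q := (q * q)%N; have : (3 * q <= Q)%N by rewrite /Q leq_mul2r q3 orbT.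
    move=> hQ; repeat (apply/andP; split); lia.
  have A : all (fun e => e < #|F|)%N es.
    rewrite /es /= hF (_ : (q ^ 3 = q * (q * q))%N); last by rewrite !expnS expn0 muln1.
    set Q := (q * q)%N; have : (3 * q <= Q)%N by rewrite /Q leq_mul2r q3 orbT.
    move=> hQ; have : (3 * Q <= q * Q)%N by rewrite leq_mul2r q3 orbT.
    move=> hQ2; repeat (apply/andP; split); lia.
  by split; apply: (poly_zero U A Hsum).
move=> hq3; have {hq3 q2} e2 : q = 2%N by lia.
subst q.
pose es2 := [:: 7; 5; 6; 4; 3; 1; 2]%N.
have Hsum2 x : \sum_(t < size es2) cs`_t * x ^+ (nth 0%N es2 t) = 0.
  have := Hsum x.
  rewrite (_ : size es = 7%N) // (_ : size es2 = 7%N) // !big_ord_recr big_ord0 /= !add0r.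
  rewrite big_ord0 add0r.
  have x8 : x ^+ 8 = x by have := expf_card x; rewrite hF.
  rewrite -[(0 + 2 * 1 + 2 * 2 * 2)%N]/(2 + 8)%N -[(0 + 2 * 2 + 2 * 2 * 1)%N]/(0 + 8)%N.
  rewrite -[(1 + 2 * 0 + 2 * 2 * 2)%N]/(1 + 8)%N (exprD x 2 8) (exprD x 0 8) (exprD x 1 8) !x8 expr0 mul1r -!exprSr.
  by move=> h; exact: h.
have U : uniq es2 by [].
have A : all (fun e => e < #|F|)%N es2 by rewrite hF.
by split; apply: (poly_zero U A Hsum2).
Qed.

Lemma L_zero q (F : finFieldType) (hq : HQ q) (hF : #|F| = (q ^ 3)%N) (b x : F) :
  Nm q b != 1 -> x - fr q (fr q b) * fr q x = 0 -> x = 0.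
Proof.
move=> hN /eqP; rewrite subr_eq0 => /eqP hx.
apply/eqP; apply: contraR hN => x0.
have := congr1 (@Nm q F) hx; rewrite NmM !Nm_fr // => h.
apply/eqP; apply: (mulIf (x := Nm q x)); first by rewrite Nm_eq0.
by rewrite mul1r -h.
Qed.

Lemma S_repr q (F : finFieldType) (hq : HQ q) (hF : #|F| = (q ^ 3)%N) (a b x : F) :
  a * fr q b = 1 ->
  let w := x - fr q (fr q b) * fr q x in
  V3 ((w * fr q (fr q w)) * - a) ((w * fr q (fr q w)) ^+ q) 0 = scale w (Vf q a b x).
Proof.
move=> hab w.
have fw : fr q w = Yf q b x by rewrite /w frB // frM fr3.
have f2w : fr q (fr q w) = fr q (fr q x) - fr q b * x.
  by rewrite fw /Yf frB // frM fr3.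
rewrite /scale /Vf /=; apply: vec3_eq.
- rewrite f2w /Xf.
  transitivity (w * (x * (a * fr q b) - a * fr q (fr q x))); first ring.
  by rewrite hab mulr1.
- by rewrite -/(fr q _) frM fr3 // fw mulrC.
- by rewrite mulr0.
Qed.

Lemma rhs_if q (F : finFieldType) (hq : HQ q) (hF : #|F| = (q ^ 3)%N) (a b : F) :
  a * fr q b = 1 -> Nm q b != 1 ->
  is_Tsls q (fun R => exists x, x != 0 /\ prop R (Vf q a b x)).
Proof.
move=> hab hN.
have a0 : a != 0 by apply/eqP=> h; move: hab; rewrite h mul0r => /eqP; rewrite eq_sym oner_eq0.
exists (- a); split; first by rewrite oppr_eq0.
move=> R _; split.
- case=> x [x0 hR].
  have := S_repr hq hF x hab; set w := x - _ => E.
  have w0 : w != 0 by apply/eqP => /(L_zero hq hF hN); apply/eqP.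
  exists (w * fr q (fr q w)); split; first by rewrite mulf_neq0 // !fr_eq0.
  apply: prop_trans hR _; apply: prop_sym; exists w; split=> //; exact: E.
- case=> x' [x'0 hR].
  pose L := fun x : F => x - fr q (fr q b) * fr q x.
  have Linj : injective L.
    move=> x y h; apply/eqP; rewrite -subr_eq0; apply/eqP; apply: (L_zero hq hF hN).
    rewrite frB //; transitivity (L x - L y); first by rewrite /L; ring.
    by rewrite h subrr.
  have [g gK Kg] := injF_bij Linj.
  set w := fr q (fr q (x'^-1)).
  have w0 : w != 0 by rewrite !fr_eq0 // invr_eq0.
  set x := g w.
  have Lx : L x = w by rewrite /x Kg.
  have x0 : x != 0.
    by apply/eqP=> h; move: w0; rewrite -Lx h /L fr0 // mulr0 subrr eqxx.
  have fw : fr q w = x'^-1 by rewrite /w fr3.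
  set mu := Nm q w.
  have mu0 : mu != 0 by rewrite /mu (Nm_eq0 hq hF).
  have fmu : mu ^+ q = mu by exact: (frNm hF w).
  have hmu : w * fr q (fr q w) = mu * x'.
    by rewrite /mu /Nm fw; field.
  have E : V3 ((w * fr q (fr q w)) * - a) ((w * fr q (fr q w)) ^+ q) 0 = scale w (Vf q a b x).
    by rewrite -Lx; exact: (S_repr hq hF x hab).
  rewrite hmu in E.
  exists x; split=> //.
  apply: prop_trans hR _.
  apply: (@prop_trans _ _ (V3 (mu * x' * - a) ((mu * x') ^+ q) 0)).
    exists mu^-1; split; first by rewrite invr_eq0.
    rewrite /scale /=; apply: vec3_eq.
    + by field.
    + by rewrite exprMn fmu mulKf.
    + by rewrite mulr0.
  exists w; split=> //.
Qed.

Lemma rhs_only q (F : finFieldType) (hq : HQ q) (hF : #|F| = (q ^ 3)%N) (a b : F) :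
  ~ (a = 0 /\ b = 0) ->
  (forall x, x != 0 -> ~ (Xf q a x = 0 /\ Yf q b x = 0)) ->
  is_Tsls q (fun R => exists x, x != 0 /\ prop R (Vf q a b x)) ->
  a * fr q b = 1 /\ Nm q b != 1.
Proof.
move=> hab hsub [th [th0 H]].
have hS x : x != 0 -> exists c x', [/\ c != 0, x' != 0 &
    Vf q a b x = scale c (V3 (x' * th) (x' ^+ q) 0)].
  move=> x0.
  have nzV : nz (Vf q a b x).
    by rewrite /nz /Vf /=; case=> h1 [h2 _]; exact: (hsub x x0 (conj h1 h2)).
  have : S_theta q th (Vf q a b x).
    by apply/(H _ nzV).1; exists x; split=> //; exact: prop_refl.
  by case=> x' [x'0 [c [c0 e]]]; exists c, x'.
set n := Nm q th.
have f0 := fr0 F hq.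
have hN x : Nm q (Xf q a x) - n * Nm q (Yf q b x) = 0.
  have [->|x0] := eqVneq x 0.
    by rewrite /Xf /Yf !f0 !mulr0 !subrr /Nm !f0 !mulr0 subrr.
  have [c [x' [c0 x'0 e]]] := hS x x0.
  move: e; rewrite /Vf /scale /= => -[eX eY _].
  rewrite eX eY (_ : x' ^+ q = fr q x') // !NmM Nm_fr // /n; ring.
have [h4 h6] := coef_extract hq hF hN.
have n0 : n != 0 by rewrite /n Nm_eq0.
have fn : fr q n = n by rewrite /n frNm.
have b0 : b != 0.
  apply/eqP=> hb; apply: hab; split=> //.
  by move: h4; rewrite hb mul0r mulr0 subr0 => /eqP; rewrite oppr_eq0 => /eqP.
have ha : a = - n * (b * fr q (fr q b)).
  by move/eqP: h4; rewrite subr_eq0 => /eqP/(congr1 -%R); rewrite opprK mulNr.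
have fa : fr q a = - n * (fr q b * b).
  by rewrite ha frM frN // fn frM fr3.
have hnN : n * Nm q b = -1.
  apply: (mulfI n0); apply: (mulIf b0).
  transitivity (a * fr q a); first by rewrite fa {1}ha /Nm; ring.
  by apply/eqP; rewrite -subr_eq0; apply/eqP; rewrite -[RHS]h6; ring.
have hab1 : a * fr q b = 1.
  by rewrite ha -[RHS]opprK -hnN /Nm; ring.
split=> //.
apply/eqP=> hNb.
have hNa : Nm q a = 1.
  have := congr1 (@Nm q F) hab1; rewrite NmM Nm_fr // hNb mulr1 => ->.
  by rewrite /Nm !fr1 !mulr1.
have q2 := q_gt1 hq.
have [x1 Hx1 | Hall] :=
  pickP (fun x : F => x + a * fr q (fr q x) + a * fr q (fr q a) * fr q x != 0).
- set x0 := x1 + _ + _ in Hx1.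
  have [c [x' [c0 x'0 e]]] := hS x0 Hx1.
  have hX : Xf q a x0 = 0.
    rewrite /Xf /x0 !frD // !frM !fr3 //.
    transitivity (x1 * (1 - Nm q a)); first by rewrite /Nm; ring.
    by rewrite hNa subrr mulr0.
  move: e; rewrite /Vf /scale /= hX => -[e1 _].
  by move/eqP: e1; rewrite eq_sym !mulf_eq0 (negbTE c0) (negbTE x'0) (negbTE th0).
- have U : uniq [:: 1%N; (q * q)%N; q].
    rewrite /= !inE !negb_or; repeat (apply/andP; split); nia.
  have A : all (fun e => e < #|F|)%N [:: 1%N; (q * q)%N; q].
    rewrite /= hF (_ : (q ^ 3 = q * (q * q))%N); last by rewrite !expnS expn0 muln1.
    repeat (apply/andP; split); nia.
  have S x : \sum_(t < size [:: 1%N; (q * q)%N; q])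
      [:: 1; a; a * fr q (fr q a)]`_t * x ^+ (nth 0%N [:: 1%N; (q * q)%N; q] t) = 0.
    rewrite (_ : size _ = 3%N) // !big_ord_recr big_ord0 /= add0r.
    have := Hall x; rewrite /= => /negbFE/eqP <-.
    by rewrite /fr exprM mul1r expr1.
  have := poly_zero U A S (i := 0%N) isT.
  by move/eqP; rewrite oner_eq0.
Qed.

Lemma Tsls_ext q (F : finFieldType) (A B : vec3 F -> Prop) :
  (forall R, A R <-> B R) -> is_Tsls q A -> is_Tsls q B.
Proof.
move=> E [th [th0 H]]; exists th; split=> // R nR; rewrite -E; exact: H.
Qed.

Unset Implicit Arguments.

Theorem theorem8p1 (q : nat) (F : finFieldType)
  (hq : exists p k : nat, prime p /\ q = (p ^ k.+1)%N)
  (hF : #|F| = (q ^ 3)%N)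
  (P : vec3 F) (hP : nz P)
  (hPT : ~ prop P (T F))
  (hPm : ~ onl P (mT F))
  (hPsub : ~ inPsub q P) :
  inFig q (T F) P <-> is_Tsls q (proj_from q P).
Proof.
have hq' : HQ q := hq.
move: hP hPT hPm hPsub; case: P => p1 p2 p3 hP hPT hPm hPsub.
have p30 : p3 != 0.
  apply/eqP=> h; apply: hPm; rewrite /onl /dot /= h; ring.
set a := p1 / p3; set b := p2 / p3.
have eP : V3 p1 p2 p3 = V3 (a * p3) (b * p3) p3 by rewrite /a /b !divfK.
rewrite eP in hP hPT hPsub *.
rewrite inFig_iff // lhs_core //.
have PE R : proj_from q (V3 (a * p3) (b * p3) p3) R <->
            (fun R => exists x : F, x != 0 /\ prop R (Vf q a b x)) R.
  exact: proj_iff.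
split.
- case=> hab hN; apply: (Tsls_ext (A := fun R => exists x : F, x != 0 /\ prop R (Vf q a b x))).
    by move=> R; rewrite PE.
  exact: rhs_if.
- move=> H; apply: rhs_only => //.
  + case=> ha hb; apply: hPT; exists p3; split=> //.
    by rewrite /scale /T /= ha hb !mulr0 mul0r mulr1.
  + move=> x x0 [hX hY]; apply: hPsub; exists x; split=> //.
    rewrite frob_fr; set y := fr q (fr q x).
    have y0 : y != 0 by rewrite /y !fr_eq0.
    move/eqP: hX; rewrite /Xf -/y subr_eq0 => /eqP hX.
    move/eqP: hY; rewrite /Yf -/y subr_eq0 => /eqP hY.
    exists (p3 / y); split; first by rewrite mulf_neq0 // invr_eq0.
    rewrite /scale /=; apply: vec3_eq; [rewrite hX | rewrite hY | idtac]; by field.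
  + apply: (Tsls_ext (A := proj_from q (V3 (a * p3) (b * p3) p3))) => //.
Qed.
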